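(* Let $n\ge 2$ be an integer and let $(x_0,y_0),\dots,(x_n,y_n)\in\mathbb{R}^2$ with $a:=x_0<x_1<\dots<x_n=:b$. For each $k\in\{1,\dots,n\}$ fix $d_k\in[0,1)$ and put \[ a_k=\frac{x_k-x_{k-1}}{x_n-x_0},\quad b_k=\frac{x_nx_{k-1}-x_0x_k}{x_n-x_0},\quad c_k=\frac{y_k-y_{k-1}}{x_n-x_0}-d_k\frac{y_n-y_0}{x_n-x_0},\quad e_k=\frac{x_ny_{k-1}-x_0y_k}{x_n-x_0}-d_k\frac{x_ny_0-x_0y_n}{x_n-x_0}, \] and $f_k(x,y)=(a_kx+b_k,\;c_kx+d_ky+e_k)$. Let $\theta=1$ if $c_1=\dots=c_n=0$ and $\theta=\dfrac{1-\max_k a_k}{2\max_k|c_k|}$ otherwise. Let $f:[a,b]\to\mathbb{R}$ be the affine fractal interpolation function associated with these data. For $k\in\{1,\dots,n\}$ set \[ u_k=\frac{b_k}{1-a_k},\qquad v_k=\frac{b_kc_k}{(1-a_k)(1-d_k)}+\frac{e_k}{1-d_k},\qquad s_k=\max\{a_k+\theta|c_k|,\,d_k\}, \] and $M=\max_{i,j\in\{1,\dots,n\}}\left(|u_i-u_j|+\theta|v_i-v_j|\right)$. Let $\sigma$ be a permutation of $\{1,\dots,n\}$ with $s_{\sigma(1)}\le\dots\le s_{\sigma(n)}$, and let $D=1-s_{\sigma(n-1)}s_{\sigma(n)}$. Define \[ A=\min\left\{\min_{1\le j\le n-1}\left(v_{\sigma(j)}-\frac{Ms_{\sigma(j)}(1+s_{\sigma(n)})}{\theta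 D}\right),\ v_{\sigma(n)}-\frac{Ms_{\sigma(n)}(1+s_{\sigma(n-1)})}{\theta D}\right\}, \] \[ B=\max\left\{\max_{1\le j\le n-1}\left(v_{\sigma(j)}+\frac{Ms_{\sigma(j)}(1+s_{\sigma(n)})}{\theta D}\right),\ v_{\sigma(n)}+\frac{Ms_{\sigma(n)}(1+s_{\sigma(n-1)})}{\theta D}\right\}. \] Then $f([a,b])\subseteq[A,B]$.
   Context: The maps $f_k$ are contractions for the metric $\rho((u_1,v_1),(u_2,v_2))=|u_1-u_2|+\theta|v_1-v_2|$ on $\mathbb{R}^2$, and the attractor of the iterated function system $\{f_1,\dots,f_n\}$ is the unique nonempty compact set $K\subseteq\mathbb{R}^2$ with $K=\bigcup_{k=1}^n f_k(K)$. The affine fractal interpolation function is the continuous function $f:[a,b]\to\mathbb{R}$ with $f(x_k)=y_k$ for all $k\in\{0,\dots,n\}$ whose graph $\{(x,f(x)):x\in[a,b]\}$ equals this attractor. Here $(u_k,v_k)$ is the fixed point of $f_k$ and $s_k$ its Lipschitz constant with respect to $\rho$. *)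

(* Defs.v *)
From Stdlib Require Import Reals Lra Lia List ClassicalEpsilon.
Import ListNotations.
Open Scope R_scope.

Definition maxk (m : nat) (g : nat -> R) : R :=
  fold_right Rmax (g 1%nat) (map g (seq 1 m)).
Definition mink (m : nat) (g : nat -> R) : R :=
  fold_right Rmin (g 1%nat) (map g (seq 1 m)).

Section Coeffs.
Variables (n : nat) (x y d : nat -> R).

Definition ak (k : nat) : R := (x k - x (k-1)%nat) / (x n - x 0%nat).
Definition bk (k : nat) : R := (x n * x (k-1)%nat - x 0%nat * x k) / (x n - x 0%nat).
Definition ck (k : nat) : R :=
  (y k - y (k-1)%nat) / (x n - x 0%nat) - d k * ((y n - y 0%nat) / (x n - x 0%nat)).
Definition ek (k : nat) : R :=
  (x n * y (k-1)%nat - x 0%nat * y k) / (x n - x 0%nat)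
  - d k * ((x n * y 0%nat - x 0%nat * y n) / (x n - x 0%nat)).

Definition fk (k : nat) (p : R * R) : R * R :=
  (ak k * fst p + bk k, ck k * fst p + d k * snd p + ek k).

Definition theta : R :=
  if excluded_middle_informative (forall k, (1 <= k <= n)%nat -> ck k = 0)
  then 1
  else (1 - maxk n ak) / (2 * maxk n (fun k => Rabs (ck k))).

Definition uk (k : nat) : R := bk k / (1 - ak k).
Definition vk (k : nat) : R :=
  bk k * ck k / ((1 - ak k) * (1 - d k)) + ek k / (1 - d k).
Definition sk (k : nat) : R := Rmax (ak k + theta * Rabs (ck k)) (d k).

Definition Mbound : R :=
  maxk n (fun i => maxk n (fun j => Rabs (uk i - uk j) + theta * Rabs (vk i - vk j))).

Definition graph (f : R -> R) : R * R -> Prop :=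
  fun p => exists t, x 0%nat <= t <= x n /\ p = (t, f t).

(* f is the affine fractal interpolation function of the data:
   continuous on [a,b], interpolates, and its graph (a nonempty compact set)
   satisfies the self-similarity equation, hence is the attractor. *)
Definition is_AFIF (f : R -> R) : Prop :=
  (forall t, x 0%nat <= t <= x n ->
      limit1_in f (fun z => x 0%nat <= z <= x n) (f t) t) /\
  (forall k, (k <= n)%nat -> f (x k) = y k) /\
  (forall p, graph f p <->
     exists k, (1 <= k <= n)%nat /\ exists q, graph f q /\ p = fk k q).

Variable sigma : nat -> nat.

Definition Dden : R := 1 - sk (sigma (n-1)%nat) * sk (sigma n).

Definition Alow : R :=
  Rmin (mink (n-1) (fun j => vk (sigma j)
          - Mbound * sk (sigma j) * (1 + sk (sigma n)) / (theta * Dden)))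
       (vk (sigma n) - Mbound * sk (sigma n) * (1 + sk (sigma (n-1)%nat)) / (theta * Dden)).
Definition Bup : R :=
  Rmax (maxk (n-1) (fun j => vk (sigma j)
          + Mbound * sk (sigma j) * (1 + sk (sigma n)) / (theta * Dden)))
       (vk (sigma n) + Mbound * sk (sigma n) * (1 + sk (sigma (n-1)%nat)) / (theta * Dden)).
End Coeffs.

(* Main.v *)
Require Import Defs.
From Stdlib Require Import Reals Lra Lia List Classical ClassicalEpsilon.
Open Scope R_scope.

Lemma fold_max_ge (l : list R) (a z : R) : In z l -> z  <=  fold_right Rmax a l.
Proof. induction l as [|b l IH]; simpl; [tauto|]. intros [<-|H]; [apply Rmax_l|].
  eapply Rle_trans; [apply IH; auto| apply Rmax_r]. Qed.
Lemma fold_max_lt (l : list R) (a c : R) : (forall z, In z l -> z < c) -> a < c -> fold_right Rmax a l < c.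
Proof. induction l as [|b l IH]; simpl; auto. intros H Ha. apply Rmax_lub_lt; auto. Qed.
Lemma fold_min_le (l : list R) (a z : R) : In z l -> fold_right Rmin a l  <=  z.
Proof. induction l as [|b l IH]; simpl; [tauto|]. intros [<-|H]; [apply Rmin_l|].
  eapply Rle_trans; [apply Rmin_r| apply IH; auto]. Qed.

Lemma maxk_ge m g k : (1  <=  k  <=  m)%nat -> g k  <=  maxk m g.
Proof. unfold maxk; intros; apply fold_max_ge; apply in_map; apply in_seq; lia. Qed.
Lemma mink_le m g k : (1  <=  k  <=  m)%nat -> mink m g  <=  g k.
Proof. unfold mink; intros; apply fold_min_le; apply in_map; apply in_seq; lia. Qed.
Lemma maxk_lt m g c : (1 <= m)%nat -> (forall k, (1 <= k <= m)%nat -> g k < c) -> maxk m g < c.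
Proof. unfold maxk; intros H0 H. apply fold_max_lt. intros z Hz. apply in_map_iff in Hz.
  destruct Hz as [k [<- Hk]]. apply in_seq in Hk. apply H; lia. apply H; lia. Qed.

Lemma x_lt (n:nat) (x: nat->R) : (forall k, (k<n)%nat -> x k < x (S k)) ->
  forall i j, (i < j  <=  n)%nat -> x i < x j.
Proof. intros H i j. induction j; intros. lia. destruct (Nat.eq_dec i j). subst; apply H; lia.
  apply Rlt_trans with (x j); [apply IHj; lia| apply H; lia]. Qed.
Lemma x_le (n:nat) (x: nat->R) : (forall k, (k<n)%nat -> x k < x (S k)) ->
  forall i j, (i  <=  j  <=  n)%nat -> x i  <=  x j.
Proof. intros H i j Hij. destruct (Nat.eq_dec i j). subst; lra. left; apply (x_lt n); auto; lia. Qed.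

Lemma bounded_f (a b : R) (f : R->R) : a  <=  b ->
  (forall t, a <= t <= b -> limit1_in f (fun z => a <= z <= b) (f t) t) ->
  exists C, forall t, a <= t <= b -> Rabs (f t)  <=  C.
Proof.
intros Hab Hc.
set (cl := fun z => Rmax a (Rmin b z)).
assert (Hcl: forall z, a  <=  cl z  <=  b). { intro z; unfold cl, Rmax, Rmin; repeat destruct Rle_dec; lra. }
assert (Hcl2: forall z w, Rabs (cl z - cl w)  <=  Rabs (z - w)).
{ intros z w; unfold cl, Rmax, Rmin; repeat destruct Rle_dec; split_Rabs; lra. }
assert (Hid: forall z, a <= z <= b -> cl z = z). {intros z Hz; unfold cl, Rmax, Rmin; repeat destruct Rle_dec; lra. }
set (g := fun z => f (cl z)).
assert (Hg: forall c, a <= c <= b -> continuity_pt g c).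
{ intros c _. unfold continuity_pt, continue_in, limit1_in, limit_in. intros eps Heps.
  destruct (Hc (cl c) (Hcl c) eps Heps) as [alp [Halp H]].
  exists alp; split; auto. intros z [_ Hz]. unfold g. apply H. split. apply Hcl. simpl in *. unfold R_dist in *.
  eapply Rle_lt_trans; [apply Hcl2| exact Hz]. }
destruct (continuity_ab_maj g a b Hab Hg) as [M1 [HM1 _]].
destruct (continuity_ab_min g a b Hab Hg) as [M2 [HM2 _]].
exists (Rabs (g M1) + Rabs (g M2)). intros t Ht. specialize (HM1 t Ht); specialize (HM2 t Ht).
unfold g in *; rewrite (Hid t Ht) in HM1, HM2. split_Rabs; lra.
Qed.

Lemma nodup_map_in (f: nat->nat) l : NoDup l -> (forall i j, In i l -> In j l -> f i = f j -> i = j) -> NoDup (map f l).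
Proof.
induction l as [|a l IH]; simpl; intros Hn Hi. constructor. inversion Hn; subst. constructor.
intro Hin. apply in_map_iff in Hin as [j [Hj Hjl]]. assert (j = a) by (apply Hi; auto). subst; contradiction.
apply IH; auto. Qed.

Lemma sigma_surj n (sigma: nat->nat) : (forall j, (1 <= j <= n)%nat -> (1 <= sigma j <= n)%nat) ->
  (forall i j, (1 <= i <= n)%nat -> (1 <= j <= n)%nat -> sigma i = sigma j -> i=j) ->
  forall k, (1 <= k <= n)%nat -> exists i, (1 <= i <= n)%nat /\ sigma i = k.
Proof.
intros H1 H2 k Hk.
assert (Hnd: NoDup (map sigma (seq 1 n))).
{ apply nodup_map_in. apply seq_NoDup. intros i j Hi Hj. apply in_seq in Hi, Hj. apply H2; lia. }
assert (Hinc := @NoDup_length_incl _ (map sigma (seq 1 n)) (seq 1 n) Hnd).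
assert (Hin: In k (map sigma (seq 1 n))).
{ apply Hinc. rewrite length_map; lia.
  intros z Hz. apply in_map_iff in Hz as [i [<- Hi]]. apply in_seq in Hi. apply in_seq. specialize (H1 i). lia.
  apply in_seq; lia. }
apply in_map_iff in Hin as [i [Hi1 Hi2]]. apply in_seq in Hi2. exists i; split; [lia|auto].
Qed.

Lemma frac01 p q : 0  <=  p < q -> 0  <=  p / q < 1.
Proof. intros. split. apply Rmult_le_pos; [lra| left; apply Rinv_0_lt_compat; lra].
  apply (Rmult_lt_reg_r q); [lra|]. unfold Rdiv; rewrite Rmult_assoc, Rinv_l; lra. Qed.

Lemma fin_bound th v w E : 0<th -> th*Rabs(w - v)  <=  E -> v - E/th  <=  w  <=  v + E/th.
Proof. intros H1 H2. assert (Rabs (w-v)  <=  E/th).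
  { apply (Rmult_le_reg_l th); auto. replace (th*(E/th)) with E by (field; lra). auto. }
  split_Rabs; lra. Qed.

Theorem theorem3p2 (n : nat) (x y d : nat -> R) (sigma : nat -> nat) (f : R -> R) :
  (2 <= n)%nat ->
  (forall k, (k < n)%nat -> x k < x (S k)) ->
  (forall k, (1 <= k <= n)%nat -> 0 <= d k < 1) ->
  (forall j, (1 <= j <= n)%nat -> (1 <= sigma j <= n)%nat) ->
  (forall i j, (1 <= i <= n)%nat -> (1 <= j <= n)%nat -> sigma i = sigma j -> i = j) ->
  (forall i j, (1 <= i <= j)%nat -> (j <= n)%nat ->
     sk n x y d (sigma i) <= sk n x y d (sigma j)) ->
  is_AFIF n x y d f ->
  forall t, x 0%nat <= t <= x n ->
    Alow n x y d sigma <= f t <= Bup n x y d sigma.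
Proof.
intros Hn Hx Hd Hs1 Hs2 Hs3 [Hcont [_ Hself]] t Ht.
assert (Hxn : x 0%nat < x n) by (apply (x_lt n); auto; lia).
assert (Ha : forall k, (1 <= k <= n)%nat -> 0 <= ak n x k < 1).
{ intros k Hk. unfold ak. apply frac01.
  assert (x (k-1)%nat < x k) by (apply (x_lt n); auto; lia).
  destruct (Nat.eq_dec k 1).
  - subst. simpl in *. assert (x 1%nat < x n) by (apply (x_lt n); auto; lia). lra.
  - assert (x 0%nat < x (k-1)%nat) by (apply (x_lt n); auto; lia).
    assert (x k <= x n) by (apply (x_le n); auto; lia). lra. }
set (th := theta n x y d).
assert (Hth : 0 < th /\ forall k, (1 <= k <= n)%nat -> ak n x k + th * Rabs (ck n x y d k) < 1).
{ unfold th, theta. destruct (excluded_middle_informative _) as [H0|H0].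
  - split; [lra|]. intros k Hk. rewrite H0, Rabs_R0 by auto. specialize (Ha k Hk). lra.
  - apply not_all_ex_not in H0 as [k0 Hk0]. apply imply_to_and in Hk0 as [Hk0 Hc0].
    set (am := maxk n (ak n x)). set (cm := maxk n (fun k => Rabs (ck n x y d k))).
    assert (Ham : am < 1) by (apply maxk_lt; [lia| intros; apply Ha; auto]).
    assert (Hcm : 0 < cm).
    { apply Rlt_le_trans with (Rabs (ck n x y d k0)). apply Rabs_pos_lt; auto.
      apply (maxk_ge n (fun k => Rabs (ck n x y d k))); auto. }
    split. apply Rdiv_lt_0_compat; lra.
    intros k Hk. assert (ak n x k <= am) by (apply (maxk_ge n (ak n x)); auto).
    assert (Rabs (ck n x y d k) <= cm) by (apply (maxk_ge n (fun k => Rabs (ck n x y d k))); auto).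
    assert ((1 - am) / (2 * cm) * Rabs (ck n x y d k) <= (1 - am) / (2 * cm) * cm).
    { apply Rmult_le_compat_l; auto. left; apply Rdiv_lt_0_compat; lra. }
    replace ((1 - am) / (2 * cm) * cm) with ((1-am)/2) in H1 by (field; lra). lra. }
destruct Hth as [Hth Hak].
assert (Hs : forall k, (1 <= k <= n)%nat -> 0 <= sk n x y d k < 1 /\
   ak n x k + th * Rabs (ck n x y d k) <= sk n x y d k /\ d k <= sk n x y d k).
{ intros k Hk. unfold sk. fold th. specialize (Hak k Hk). specialize (Hd k Hk).
  split; [split|split]. eapply Rle_trans; [|apply Rmax_r]; lra. apply Rmax_lub_lt; lra.
  apply Rmax_l. apply Rmax_r. }
set (rho := fun p q : R * R => Rabs (fst p - fst q) + th * Rabs (snd p - snd q)).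
assert (Hrho0 : forall p q, 0 <= rho p q).
{ intros p q; unfold rho. pose proof (Rabs_pos (fst p - fst q)); pose proof (Rabs_pos (snd p - snd q)). nra. }
assert (Htri : forall p q r, rho p r <= rho p q + rho q r).
{ intros p q r; unfold rho.
  pose proof (Rabs_triang (fst p - fst q) (fst q - fst r)).
  pose proof (Rabs_triang (snd p - snd q) (snd q - snd r)).
  replace (fst p - fst q + (fst q - fst r)) with (fst p - fst r) in H by ring.
  replace (snd p - snd q + (snd q - snd r)) with (snd p - snd r) in H0 by ring. nra. }
assert (Hsym : forall p q, rho p q = rho q p).
{ intros; unfold rho. rewrite (Rabs_minus_sym (fst p)), (Rabs_minus_sym (snd p)). auto. }
assert (Hlip : forall k p q, (1 <= k <= n)%nat -> rho (fk n x y d k p) (fk n x y d k q) <= sk n x y d k * rho p q).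
{ intros k [p1 p2] [q1 q2] Hk. unfold rho, fk; simpl.
  destruct (Hs k Hk) as [[Hs0 _] [Hsa Hsd]]. destruct (Ha k Hk) as [Ha0 _]. specialize (Hd k Hk).
  replace (ak n x k * p1 + bk n x k - (ak n x k * q1 + bk n x k)) with (ak n x k * (p1 - q1)) by ring.
  replace (ck n x y d k * p1 + d k * p2 + ek n x y d k - (ck n x y d k * q1 + d k * q2 + ek n x y d k))
    with (ck n x y d k * (p1 - q1) + d k * (p2 - q2)) by ring.
  pose proof (Rabs_triang (ck n x y d k * (p1 - q1)) (d k * (p2 - q2))).
  rewrite !Rabs_mult in *. rewrite (Rabs_pos_eq (ak n x k)) by lra. rewrite (Rabs_pos_eq (d k)) in H by lra.
  pose proof (Rabs_pos (p1 - q1)). pose proof (Rabs_pos (p2 - q2)). pose proof (Rabs_pos (ck n x y d k)).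
  assert ((ak n x k + th * Rabs (ck n x y d k)) * Rabs (p1 - q1) <= sk n x y d k * Rabs (p1 - q1))
    by (apply Rmult_le_compat_r; auto).
  assert (d k * Rabs (p2 - q2) <= sk n x y d k * Rabs (p2 - q2)) by (apply Rmult_le_compat_r; auto).
  nra. }
set (P := fun k => (uk n x k, vk n x y d k)).
assert (Hfix : forall k, (1 <= k <= n)%nat -> fk n x y d k (P k) = P k).
{ intros k Hk. destruct (Ha k Hk). specialize (Hd k Hk). unfold P, fk, uk, vk; simpl. f_equal; field; lra. }
set (M := Mbound n x y d).
assert (HM : forall i j, (1 <= i <= n)%nat -> (1 <= j <= n)%nat -> rho (P i) (P j) <= M).
{ intros i j Hi Hj. unfold M, Mbound. fold th.
  eapply Rle_trans; [| apply (maxk_ge n _ i Hi)]. simpl.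
  apply (maxk_ge n (fun j0 => Rabs (uk n x i - uk n x j0) + th * Rabs (vk n x y d i - vk n x y d j0))); auto. }
assert (HM0 : 0 <= M) by (eapply Rle_trans; [apply (Hrho0 (P 1%nat) (P 1%nat))| apply HM; lia]).
set (K := graph n x f).
assert (Hkey : forall p, K p -> exists j q, (1 <= j <= n)%nat /\ K q /\ rho p (P j) <= sk n x y d j * rho q (P j)).
{ intros p Hp. apply Hself in Hp as [j [Hj [q [Hq ->]]]]. exists j, q; split; auto; split; auto.
  rewrite <- (Hfix j Hj) at 1. apply Hlip; auto. }
destruct (bounded_f (x 0%nat) (x n) f ltac:(lra) Hcont) as [C HC].
assert (Hbd : forall p k, K p -> (1 <= k <= n)%nat ->
   rho p (P k) <= Rabs (x 0%nat) + Rabs (x n) + Rabs (uk n x 1%nat) + th * (C + Rabs (vk n x y d 1%nat)) + M).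
{ intros p k [s [Hs' ->]] Hk. eapply Rle_trans; [apply (Htri _ (P 1%nat))|].
  assert (rho (P 1%nat) (P k) <= M) by (apply HM; auto; lia).
  assert (rho (s, f s) (P 1%nat) <= Rabs (x 0%nat) + Rabs (x n) + Rabs (uk n x 1%nat) + th * (C + Rabs (vk n x y d 1%nat))).
  { unfold rho, P; simpl. specialize (HC s Hs').
    assert (Rabs (f s - vk n x y d 1%nat) <= C + Rabs (vk n x y d 1%nat)) by (split_Rabs; lra).
    assert (Rabs (s - uk n x 1%nat) <= Rabs (x 0%nat) + Rabs (x n) + Rabs (uk n x 1%nat)) by (split_Rabs; lra).
    nra. }
  lra. }
assert (Hsurj := sigma_surj n sigma Hs1 Hs2).
set (N := sigma n). set (N' := sigma (n-1)%nat).
assert (HN : (1 <= N <= n)%nat) by (apply Hs1; lia).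
assert (HN' : (1 <= N' <= n)%nat) by (apply Hs1; lia).
assert (HNN' : sk n x y d N' <= sk n x y d N) by (apply Hs3; lia).
assert (Hsj : forall j, (1 <= j <= n)%nat -> j <> N -> sk n x y d j <= sk n x y d N').
{ intros j Hj HjN. destruct (Hsurj j Hj) as [i [Hi <-]]. assert (i <> n) by (intro; subst; auto).
  apply Hs3; lia. }
set (Es := fun r => exists k p, (1 <= k <= n)%nat /\ k <> N /\ K p /\ r = rho p (P k)).
set (EN := fun r => exists p, K p /\ r = rho p (P N)).
set (Bd := Rabs (x 0%nat) + Rabs (x n) + Rabs (uk n x 1%nat) + th * (C + Rabs (vk n x y d 1%nat)) + M).
assert (HK0 : K (x 0%nat, f (x 0%nat))) by (exists (x 0%nat); split; [lra|auto]).
assert (HN1 : sigma 1%nat <> N) by (intro H; apply Hs2 in H; lia).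
destruct (completeness Es) as [ms [Hms1 Hms2]].
{ exists Bd. intros r [k [p [Hk [_ [Hp ->]]]]]. apply Hbd; auto. }
{ exists (rho (x 0%nat, f (x 0%nat)) (P (sigma 1%nat))). exists (sigma 1%nat), (x 0%nat, f (x 0%nat)).
  repeat split; auto; apply Hs1; lia. }
destruct (completeness EN) as [mN [HmN1 HmN2]].
{ exists Bd. intros r [p [Hp ->]]. apply Hbd; auto. }
{ exists (rho (x 0%nat, f (x 0%nat)) (P N)). exists (x 0%nat, f (x 0%nat)). split; auto. }
assert (Hms0 : 0 <= ms).
{ eapply Rle_trans; [apply (Hrho0 (x 0%nat, f (x 0%nat)) (P (sigma 1%nat)))|]. apply Hms1.
  exists (sigma 1%nat), (x 0%nat, f (x 0%nat)). repeat split; auto; apply Hs1; lia. }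
assert (HmN0 : 0 <= mN).
{ eapply Rle_trans; [apply (Hrho0 (x 0%nat, f (x 0%nat)) (P N))|]. apply HmN1.
  exists (x 0%nat, f (x 0%nat)). split; auto. }
set (sN := sk n x y d N). set (sN' := sk n x y d N').
assert (HsN := Hs N HN). assert (HsN' := Hs N' HN'). fold sN in HsN. fold sN' in HsN'.
assert (Hstar : forall j q, (1 <= j <= n)%nat -> j <> N -> K q -> sk n x y d j * rho q (P j) <= sN' * ms).
{ intros j q Hj HjN Hq. destruct (Hs j Hj) as [[Hj0 _] _]. apply Rmult_le_compat; [exact Hj0|apply Hrho0|apply Hsj; auto|]. apply Hms1. exists j, q; auto. }
assert (HNb : forall q, K q -> sN * rho q (P N) <= sN * mN).
{ intros q Hq. apply Rmult_le_compat_l; [lra|]. apply HmN1. exists q; auto. }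
assert (Hcl1 : mN <= M + sN' * ms).
{ assert (mN <= Rmax (sN * mN) (M + sN' * ms)).
  { apply HmN2. intros r [p [Hp ->]]. destruct (Hkey p Hp) as [j [q [Hj [Hq Hr]]]].
    destruct (Nat.eq_dec j N).
    - subst j. eapply Rle_trans; [|apply Rmax_l]. eapply Rle_trans; [apply Hr| apply HNb; auto].
    - eapply Rle_trans; [|apply Rmax_r]. eapply Rle_trans; [apply (Htri _ (P j))|].
      assert (rho (P j) (P N) <= M) by (apply HM; auto).
      assert (sk n x y d j * rho q (P j) <= sN' * ms) by (apply Hstar; auto). lra. }
  unfold Rmax in H; destruct Rle_dec in H; [lra|].
  assert (mN <= 0) by nra. nra. }
assert (Hcl2 : ms <= Rmax (sN' * ms + M) (sN * mN + M)).
{ apply Hms2. intros r [k [p [Hk [HkN [Hp ->]]]]]. destruct (Hkey p Hp) as [j [q [Hj [Hq Hr]]]].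
  destruct (Nat.eq_dec j k).
  - subst j. eapply Rle_trans; [|apply Rmax_l]. eapply Rle_trans; [apply Hr|].
    assert (sk n x y d k * rho q (P k) <= sN' * ms) by (apply Hstar; auto). lra.
  - eapply Rle_trans; [apply (Htri _ (P j))|].
    assert (rho (P j) (P k) <= M) by (apply HM; auto).
    destruct (Nat.eq_dec j N).
    + subst j. eapply Rle_trans; [|apply Rmax_r]. specialize (HNb q Hq). fold sN in Hr. lra.
    + eapply Rle_trans; [|apply Rmax_l].
      assert (sk n x y d j * rho q (P j) <= sN' * ms) by (apply Hstar; auto). lra. }
set (D := 1 - sN' * sN).
assert (HD : 0 < D) by (unfold D; nra).
assert (HmsD : ms * D <= M * (1 + sN)).
{ unfold D. unfold Rmax in Hcl2; destruct Rle_dec in Hcl2.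
  - assert (sN * mN <= sN * (M + sN' * ms)) by (apply Rmult_le_compat_l; lra). nra.
  - assert (ms * (1 - sN') <= M) by nra.
    assert (0 < 1 + sN) by lra. assert (0 <= sN - sN') by (unfold sN, sN'; lra).
    assert (0 <= ms * (sN - sN')) by nra.
    assert (ms * (1 - sN') * (1 + sN) <= M * (1 + sN)) by (apply Rmult_le_compat_r; lra). nra. }
set (X := M * (1 + sN) / D). set (Y := M * (1 + sN') / D).
assert (HX : ms <= X).
{ unfold X. apply (Rmult_le_reg_r D); auto. replace (M * (1 + sN) / D * D) with (M * (1 + sN)) by (field; lra). lra. }
assert (HY : mN <= Y).
{ assert (HD' : 1 - sN' * sN <> 0) by (unfold D in HD; lra).
  replace Y with (M + sN' * X) by (unfold X, Y, D; field; auto).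
  assert (sN' * ms <= sN' * X) by (apply Rmult_le_compat_l; lra). lra. }
assert (Hp0 : K (t, f t)) by (exists t; auto).
destruct (Hkey _ Hp0) as [j [q [Hj [Hq Hr]]]].
assert (Hv : th * Rabs (f t - vk n x y d j) <= rho (t, f t) (P j)).
{ unfold rho, P; simpl. pose proof (Rabs_pos (t - uk n x j)). lra. }
assert (HDd : Dden n x y d sigma = D) by reflexivity.
unfold Alow, Bup. rewrite HDd. fold M th N N' sN sN'.
destruct (Nat.eq_dec j N).
- subst j. assert (rho q (P N) <= mN) by (apply HmN1; exists q; auto).
  assert (th * Rabs (f t - vk n x y d N) <= sN * Y).
  { eapply Rle_trans; [apply Hv|]. eapply Rle_trans; [apply Hr|]. fold sN. apply Rmult_le_compat_l; lra. }
  apply fin_bound in H0; auto.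
  replace (M * sN * (1 + sN') / (th * D)) with (sN * Y / th) by (unfold Y; field; lra).
  split; [eapply Rle_trans; [apply Rmin_r|]| eapply Rle_trans; [|apply Rmax_r]]; lra.
- destruct (Hsurj j Hj) as [i [Hi Hij]]. assert (i <> n) by (intro; subst; auto).
  assert (rho q (P j) <= ms) by (apply Hms1; exists j, q; auto).
  destruct (Hs j Hj) as [[Hj0 _] _].
  assert (th * Rabs (f t - vk n x y d j) <= sk n x y d j * X).
  { eapply Rle_trans; [apply Hv|]. eapply Rle_trans; [apply Hr|]. apply Rmult_le_compat_l; lra. }
  apply fin_bound in H1; auto.
  split.
  + eapply Rle_trans; [apply Rmin_l|]. eapply Rle_trans; [apply (mink_le (n-1)) with (k := i); lia|].
    simpl. rewrite Hij. replace (M * sk n x y d j * (1 + sN) / (th * D)) with (sk n x y d j * X / th)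
      by (unfold X; field; lra). lra.
  + eapply Rle_trans; [|apply Rmax_l]. eapply Rle_trans; [|apply (maxk_ge (n-1)) with (k := i); lia].
    simpl. rewrite Hij. replace (M * sk n x y d j * (1 + sN) / (th * D)) with (sk n x y d j * X / th)
      by (unfold X; field; lra). lra.
Qed.
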